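(* In the setting of the context, fix distinct integers $r,s$ with $0\le r,s\le d$. The following are equivalent: (i) in $\Delta$, vertex $r$ is adjacent to vertex $s$ and to no other vertex; (ii) there exists $\kappa\in\mathbb F$ such that $(A^*-\kappa I)E_rV=E_sV$. Moreover, if (i) and (ii) hold then $\kappa=a^*_r$.
   Context: Let $\mathbb F$ be a field, $d\ge1$ an integer, $V$ a vector space over $\mathbb F$ of dimension $d+1$, $\mathcal A=\mathrm{End}(V)$ with identity $I$. Let $E^*_0,\dots,E^*_d\in\mathcal A$ satisfy $E^*_iE^*_j=\delta_{i,j}E^*_i$ and $\mathrm{rank}(E^*_i)=1$ for $0\le i,j\le d$. Let $A\in\mathcal A$ satisfy $E^*_iAE^*_j=0$ if $|i-j|>1$ and $E^*_iAE^*_j\neq0$ if $|i-j|=1$. Assume $A$ has $d+1$ mutually distinct eigenvalues $\theta_0,\dots,\theta_d$ in $\mathbb F$, and let $E_i=\prod_{j\ne i}\frac{A-\theta_jI}{\theta_i-\theta_j}$ be the primitive idempotent of $A$ for $\theta_i$. Let $\theta^*_0,\dots,\theta^*_d\in\mathbb F$ and $A^*=\sum_{i=0}^d\theta^*_iE^*_i$. Define $a^*_i=\mathrm{tr}(E_iA^* )$. Let $\Delta$ be the graph on vertex set $\{0,\dots,d\}$ in which $i,j$ are adjacent iff $i\ne j$ and $E_iA^*E_j\ne0$. *)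

(* Defs.v *)
(* V = column vectors 'cV[F]_(d.+1), End(V) = 'M[F]_(d.+1). *)
From HB Require Import structures.
From mathcomp Require Import all_boot all_order all_algebra.
Set Implicit Arguments. Unset Strict Implicit. Unset Printing Implicit Defensive.
Import Order.TTheory GRing.Theory Num.Theory.
Local Open Scope ring_scope.

Definition prim_idem (F : fieldType) (d : nat) (A : 'M[F]_(d.+1))
  (theta : 'I_(d.+1) -> F) (i : 'I_(d.+1)) : 'M[F]_(d.+1) :=
  \prod_(j < d.+1 | j != i) ((theta i - theta j)^-1 *: (A - (theta j)%:M)).

Definition dual_op (F : fieldType) (d : nat) (Es : 'I_(d.+1) -> 'M[F]_(d.+1))
  (thetas : 'I_(d.+1) -> F) : 'M[F]_(d.+1) :=
  \sum_(i < d.+1) thetas i *: Es i.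

Definition Delta_adj (F : fieldType) (d : nat) (A Astar : 'M[F]_(d.+1))
  (theta : 'I_(d.+1) -> F) (i j : 'I_(d.+1)) : bool :=
  (i != j) && (prim_idem A theta i *m Astar *m prim_idem A theta j != 0).

Definition astar (F : fieldType) (d : nat) (A Astar : 'M[F]_(d.+1))
  (theta : 'I_(d.+1) -> F) (i : 'I_(d.+1)) : F :=
  \tr (prim_idem A theta i *m Astar).

(* condition (ii) for a given kappa: (Astar - kappa I) E_r V = E_s V,
   where the image (column space) of M is the row space of M^T. *)
Definition cond_ii (F : fieldType) (d : nat) (A Astar : 'M[F]_(d.+1))
  (theta : 'I_(d.+1) -> F) (r s : 'I_(d.+1)) (kappa : F) : bool :=
  ((((Astar - kappa%:M) *m prim_idem A theta r)^T
     == (prim_idem A theta s)^T)%MS).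

(* Main.v *)
Require Import Defs.
From HB Require Import structures.
From mathcomp Require Import all_boot all_order all_algebra zify.
Import Order.TTheory GRing.Theory Num.Theory.
Local Open Scope ring_scope.

Set Implicit Arguments. Unset Strict Implicit. Unset Printing Implicit Defensive.


Section Aux.
Variable F : fieldType.

Lemma rank1_decomp m n (E : 'M[F]_(m,n)) : \rank E = 1%N ->
  exists u : 'cV[F]_m, exists w : 'rV[F]_n, E = u *m w.
Proof.
move=> h; have := mulmx_base E; move: (col_base E) (row_base E).
rewrite h => c r <-; by exists c, r.
Qed.

Lemma rank1_idem n (E : 'M[F]_n) : E *m E = E -> \rank E = 1%N ->
  exists u : 'cV[F]_n, exists w : 'rV[F]_n, E = u *m w /\ w *m u = 1%:M.
Proof.
move=> hE hr; have [u [w defE]] := rank1_decomp hr.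
exists u, w; split => //.
have Enz : E != 0 by rewrite -mxrank_eq0 hr.
have : ((w *m u) 0 0 - 1) *: E = 0.
  have h2 : E *m E = (w *m u) 0 0 *: E.
    by rewrite defE mulmxA -(mulmxA u) {1}[w *m u]mx11_scalar mul_mx_scalar -scalemxAl.
  by rewrite scalerBl scale1r -h2 hE subrr.
move/eqP; rewrite scaler_eq0 (negbTE Enz) orbF subr_eq0 => /eqP h1.
by rewrite [w *m u]mx11_scalar h1.
Qed.

Lemma rank1_sandwich n (E : 'M[F]_n) : E *m E = E -> \rank E = 1%N ->
  forall X, E *m X *m E = \tr (E *m X) *: E.
Proof.
move=> hE hr X; have [u [w [defE hwu]]] := rank1_idem hE hr.
have e1 : E *m X *m E = u *m (w *m X *m u) *m w by rewrite defE !mulmxA.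
have e2 : \tr (E *m X) = \tr (w *m X *m u) by rewrite defE -mulmxA mxtrace_mulC.
rewrite e1 e2 {1}[w *m X *m u]mx11_scalar mul_mx_scalar -scalemxAl -defE.
by congr (_ *: _); rewrite {2}[w *m X *m u]mx11_scalar mxtrace_scalar.
Qed.

Lemma rank1_tr n (E : 'M[F]_n) : E *m E = E -> \rank E = 1%N -> \tr E = 1.
Proof.
move=> hE hr; have [u [w [defE hwu]]] := rank1_idem hE hr.
by rewrite defE mxtrace_mulC hwu mxtrace_scalar.
Qed.

Lemma orth_idem_rank2 n (X Y : 'M[F]_n) : X *m X = X -> X *m Y = 0 -> Y *m X = 0 ->
  (\rank X + \rank Y <= \rank (X + Y)%R)%N.
Proof.
move=> hXX hXY hYX.
have capz : (X :&: Y)%MS = 0.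
  set Z := (X :&: Y)%MS.
  have [D hD] := submxP (capmxSl X Y : (Z <= X)%MS).
  have [D' hD'] := submxP (capmxSr X Y : (Z <= Y)%MS).
  have : Z *m X = Z by rewrite hD -mulmxA hXX.
  by rewrite {1}hD' -mulmxA hYX mulmx0 => <-.
rewrite -mxrank_sum_cap capz mxrank0 addn0; apply: mxrankS.
rewrite addsmx_sub; apply/andP; split.
  have hX : X *m (X + Y) = X by rewrite mulmxDr hXX hXY addr0.
  rewrite -{1}hX; exact: submxMl.
have hY : (1%:M - X) *m (X + Y) = Y.
  by rewrite mulmxBl !mulmxDr !mul1mx hXX hXY addr0 addrC addKr.
rewrite -{1}hY; exact: submxMl.
Qed.

Lemma orth_idem_rank m n (G : 'I_m -> 'M[F]_n) :
  (forall i j, G i *m G j = if i == j then G i else 0) ->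
  (\sum_i \rank (G i) <= \rank (\sum_i G i)%R)%N.
Proof.
move=> hG; rewrite /index_enum -!enumT.
have : uniq (enum 'I_m) by exact: enum_uniq.
elim: (enum 'I_m) => [|i s IH]; first by rewrite !big_nil.
rewrite /= => /andP [nis us]; rewrite !big_cons.
apply: leq_trans (orth_idem_rank2 _ _ _); first by rewrite leq_add2l IH.
- by rewrite hG eqxx.
- rewrite mulmx_sumr big1_seq // => j /andP [_ js]; rewrite hG.
  by case: eqP => // eij; subst; rewrite js in nis.
- rewrite mulmx_suml big1_seq // => j /andP [_ js]; rewrite hG.
  by case: eqP => // eij; subst; rewrite js in nis.
Qed.

End Aux.

Section Poly.
Variables (F : fieldType) (d : nat) (A : 'M[F]_(d.+1)) (theta : 'I_(d.+1) -> F).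
Hypothesis htheta_inj : injective theta.
Hypothesis htheta_eig : forall i, eigenvalue A (theta i).

Let rs := map theta (index_enum 'I_(d.+1)).
Let P := \prod_(j < d.+1) ('X - (theta j)%:P).
Let Q i := \prod_(j < d.+1 | j != i) ('X - (theta j)%:P).
Let c i := \prod_(j < d.+1 | j != i) (theta i - theta j)^-1.
Let p i := \prod_(j < d.+1 | j != i) ((theta i - theta j)^-1 *: ('X - (theta j)%:P)).

Lemma size_rs : size rs = d.+1.
Proof. by rewrite size_map [index_enum _]unlock -enumT -cardT card_ord. Qed.

Lemma P_rs : P = \prod_(z <- rs) ('X - z%:P).
Proof. by rewrite big_map. Qed.

Lemma charP : char_poly A = P.
Proof.
have hdv : P %| char_poly A.
  rewrite P_rs; apply: uniq_roots_dvdp.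
    by apply/allP => z /mapP [j _ ->]; rewrite -eigenvalue_root_char.
  by rewrite uniq_rootsE map_inj_uniq ?index_enum_uniq.
have : size P == size (char_poly A).
  by rewrite P_rs size_prod_XsubC size_rs size_char_poly.
rewrite dvdp_size_eqp // eqp_monic ?char_poly_monic ?monic_prod_XsubC //.
by move/eqP.
Qed.

Lemma pE i : p i = c i *: Q i.
Proof. by rewrite /p scaler_prod. Qed.

Lemma hornerE i : horner_mx A (p i) =
  \prod_(j < d.+1 | j != i) ((theta i - theta j)^-1 *: (A - (theta j)%:M)).
Proof.
rewrite /p rmorph_prod; apply: eq_bigr => j _.
transitivity (horner_mx A ((theta i - theta j)^-1 *: ('X - (theta j)%:P))) => //.
by rewrite horner_mxZ rmorphB /= horner_mx_X horner_mx_C.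
Qed.

Lemma PQ i : P = ('X - (theta i)%:P) * Q i.
Proof. by rewrite /P (bigD1 i). Qed.

Lemma sizeQ i : size (Q i) = d.+1.
Proof.
have hP : size P = d.+2 by rewrite P_rs size_prod_XsubC size_rs.
have Qnz : Q i != 0.
  apply/eqP => hQ; move: hP; rewrite (PQ i) hQ mulr0 size_poly0 //.
move: hP; rewrite (PQ i) size_mul ?polyXsubC_eq0 // size_XsubC /=.
by case.
Qed.

Lemma AE0 i : (A - (theta i)%:M) *m horner_mx A (p i) = 0.
Proof.
have -> : A - (theta i)%:M = horner_mx A ('X - (theta i)%:P).
  by rewrite rmorphB /= horner_mx_X horner_mx_C.
rewrite mulmxE -rmorphM /= pE -scalerAr -(PQ i) -charP horner_mxZ.
by rewrite Cayley_Hamilton scaler0.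
Qed.

Lemma horner_eig (M : 'M[F]_(d.+1)) a : A *m M = a *: M ->
  forall q, horner_mx A q *m M = q.[a] *: M.
Proof.
move=> hM; elim/poly_ind => [|q b IH].
  by rewrite rmorph0 mul0mx horner0 scale0r.
rewrite rmorphD rmorphM /= horner_mx_X horner_mx_C -mulmxE mulmxDl -mulmxA hM.
rewrite -scalemxAr IH scalerA mul_scalar_mx hornerMXaddC scalerDl.
by rewrite mulrC.
Qed.

Lemma horner_eig_row (v : 'rV[F]_(d.+1)) a : v *m A = a *: v ->
  forall q, v *m horner_mx A q = q.[a] *: v.
Proof.
move=> hv; elim/poly_ind => [|q b IH].
  by rewrite rmorph0 mulmx0 horner0 scale0r.
rewrite rmorphD rmorphM /= horner_mx_X horner_mx_C -mulmxE mulmxDr mulmxA IH.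
rewrite -scalemxAl hv scalerA mul_mx_scalar hornerMXaddC scalerDl.
by rewrite mulrC.
Qed.

Lemma p_eval i k : (p i).[theta k] = (i == k)%:R.
Proof.
rewrite /p horner_prod.
have [<-|nik] := eqVneq i k.
  rewrite big1 // => j ji; rewrite hornerZ hornerXsubC mulVf //.
  by rewrite subr_eq0; apply/eqP => /htheta_inj eji; rewrite eji eqxx in ji.
rewrite (bigD1 k) 1?eq_sym //= hornerZ hornerXsubC subrr mulr0 mul0r //.
Qed.

Lemma sum_p : \sum_(i < d.+1) p i = 1.
Proof.
apply/eqP; rewrite -subr_eq0; apply/eqP.
apply: (roots_geq_poly_eq0 (rs := rs)).
- apply/allP => z /mapP [k _ ->]; rewrite /root hornerD hornerN hornerC horner_sum.
  rewrite (bigD1 k) //= p_eval eqxx big1 ?addr0 ?subrr //.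
  by move=> j jk; rewrite p_eval (negbTE jk).
- by rewrite map_inj_uniq ?index_enum_uniq.
rewrite size_rs; apply: leq_trans (size_polyD _ _) _; rewrite geq_max size_polyN size_poly1 /=.
rewrite andbT; apply: leq_trans (size_sum _ _ _) _.
elim/big_rec: _ => // i x _ hx; rewrite geq_max hx andbT pE.
by apply: leq_trans (size_scale_leq _ _) _; rewrite sizeQ.
Qed.


Let E i := prim_idem A theta i.

Lemma E_horner i : E i = horner_mx A (p i).
Proof. by rewrite hornerE. Qed.

Lemma E_AE i : A *m E i = theta i *: E i.
Proof.
have := AE0 i; rewrite -E_horner mulmxBl mul_scalar_mx => /eqP.
by rewrite subr_eq0 => /eqP.
Qed.

Lemma E_mul i j : E i *m E j = if i == j then E i else 0.
Proof.
rewrite {1}E_horner (horner_eig (E_AE j)) p_eval.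
by case: eqVneq => [->|_]; rewrite ?scale1r ?scale0r.
Qed.

Lemma E_sum : \sum_i E i = 1%:M.
Proof.
under eq_bigr do rewrite E_horner.
by rewrite -rmorph_sum sum_p rmorph1.
Qed.

Lemma E_nz i : E i != 0.
Proof.
have [v hv vnz] := eigenvalueP (htheta_eig i).
apply: contraNneq vnz => h0.
have := horner_eig_row hv (p i); rewrite -E_horner h0 mulmx0 p_eval eqxx scale1r.
by move=> <-.
Qed.

Lemma E_rank i : \rank (E i) = 1%N.
Proof.
have hs := orth_idem_rank E_mul; rewrite E_sum mxrank1 in hs.
have ge1 : forall j, (1 <= \rank (E j))%N by move=> j; rewrite lt0n mxrank_eq0 E_nz.
apply/eqP; rewrite eqn_leq ge1 andbT.
move: hs; rewrite (bigD1 i) //=.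
have : (d <= \sum_(j < d.+1 | j != i) \rank (E j))%N.
  have h1 : (\sum_(j < d.+1 | j != i) 1 <= \sum_(j < d.+1 | j != i) \rank (E j))%N.
    by apply: leq_sum => j _; exact: ge1 j.
  by move: h1; rewrite sum1_card cardC1 card_ord.
move=> h1 h2; have := leq_trans (leq_add (leqnn _) h1) h2.
by move=> h3; rewrite -(leq_add2r d) add1n.
Qed.

Lemma E_poly i : exists q, prim_idem A theta i = horner_mx A q.
Proof. by exists (p i); rewrite -E_horner. Qed.

End Poly.

Section Sym.
Variables (F : fieldType) (d : nat) (Es : 'I_(d.+1) -> 'M[F]_(d.+1)) (A : 'M[F]_(d.+1)).
Hypothesis hEs_idem : forall i j : 'I_(d.+1),
     Es i *m Es j = (if i == j then Es i else 0).
Hypothesis hEs_rank : forall i, \rank (Es i) = 1%N.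
Hypothesis hA_far : forall i j : 'I_(d.+1), ((i.+1 < j)%N || (j.+1 < i)%N) ->
     Es i *m A *m Es j = 0.
Hypothesis hA_near : forall i j : 'I_(d.+1), ((i.+1 == j) || (j.+1 == i)) ->
     Es i *m A *m Es j != 0.

Lemma Es_sum : \sum_i Es i = 1%:M.
Proof.
set S := \sum_i Es i.
have hr := orth_idem_rank hEs_idem.
have hsum : (\sum_i \rank (Es i))%N = d.+1.
  by rewrite (eq_bigr (fun _ => 1%N)) ?sum1_card ?card_ord.
rewrite hsum in hr.
have hrk : \rank S = d.+1.
  by apply/eqP; rewrite eqn_leq rank_leq_row hr.
have Su : S \in unitmx by rewrite -row_full_unit /row_full hrk.
have SE : forall j, S *m Es j = Es j.
  move=> j; rewrite /S mulmx_suml (bigD1 j) //= hEs_idem eqxx big1 ?addr0 //.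
  by move=> i /negbTE ij; rewrite hEs_idem ij.
have SS : S *m S = S by rewrite {2}/S mulmx_sumr; under eq_bigr do rewrite SE.
by have h := mulKmx Su S; rewrite SS (mulVmx Su) in h.
Qed.

Lemma uw_ex : exists uw : 'I_(d.+1) -> 'cV[F]_(d.+1) * 'rV[F]_(d.+1),
  forall k, Es k = (uw k).1 *m (uw k).2 /\ (uw k).2 *m (uw k).1 = 1%:M.
Proof.
have h : forall k, exists x : 'cV[F]_(d.+1) * 'rV[F]_(d.+1),
    Es k = x.1 *m x.2 /\ x.2 *m x.1 = 1%:M.
  move=> k; have [|u [w [h1 h2]]] := rank1_idem _ (hEs_rank k).
    by rewrite hEs_idem eqxx.
  by exists (u, w).
have [uw huw] := fin_all_exists h; by exists uw.
Qed.


Lemma trmx_sum' m n (I : Type) (r : seq I) (P : pred I) (G : I -> 'M[F]_(m,n)) :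
  (\sum_(i <- r | P i) G i)^T = \sum_(i <- r | P i) (G i)^T.
Proof. by elim/big_rec2: _ => [|i x y _ <-]; rewrite ?trmx0 // linearD. Qed.

Section UW.
Variables (u : 'I_(d.+1) -> 'cV[F]_(d.+1)) (w : 'I_(d.+1) -> 'rV[F]_(d.+1)).
Hypothesis huw : forall k, Es k = u k *m w k.
Hypothesis hwu : forall k, w k *m u k = 1%:M.

Lemma wEs i : w i *m Es i = w i.
Proof. by rewrite huw mulmxA hwu mul1mx. Qed.
Lemma Esu i : Es i *m u i = u i.
Proof. by rewrite huw -mulmxA hwu mulmx1. Qed.

Lemma wu_orth i j : w i *m u j = if i == j then 1%:M else 0.
Proof.
have [<-|ij] := eqVneq i j; first exact: hwu.
by rewrite -wEs -Esu mulmxA -(mulmxA (w i)) hEs_idem (negbTE ij) mulmx0 mul0mx.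
Qed.

Definition t i j := (w i *m A *m u j) 0 0.

Lemma EAE i j : Es i *m A *m Es j = t i j *: (u i *m w j).
Proof.
rewrite !huw !mulmxA -(mulmxA (u i)) -(mulmxA (u i)) -(mulmxA (w i)) /t.
rewrite {1}[w i *m (A *m u j)]mx11_scalar mul_mx_scalar -scalemxAl.
by rewrite mulmxA.
Qed.

Lemma wAu i j : w i *m A *m u j = w i *m (Es i *m A *m Es j) *m u j.
Proof. by rewrite !mulmxA wEs -!mulmxA Esu. Qed.

Lemma t_far (i j : 'I_(d.+1)) : ((i.+1 < j)%N || (j.+1 < i)%N) -> t i j = 0.
Proof. by move=> h; rewrite /t wAu hA_far // mulmx0 mul0mx mxE. Qed.

Lemma t_near (i j : 'I_(d.+1)) : ((i.+1 == j) || (j.+1 == i)) -> t i j != 0.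
Proof.
move=> h; apply: contra (hA_near h) => /eqP t0.
by rewrite EAE t0 scale0r.
Qed.

Fixpoint dd (k : nat) : F :=
  if k is k'.+1 then dd k' * t (inord k') (inord k'.+1) / t (inord k'.+1) (inord k')
  else 1.

Lemma dd_nz k : (k <= d)%N -> dd k != 0.
Proof.
elim: k => [|k IH] hk /=; first exact: oner_neq0.
have hk1 : (k < d.+1)%N by lia.
have hk2 : (k.+1 < d.+1)%N by lia.
have hIH : dd k != 0 by apply: IH; lia.
have ht1 : t (inord k) (inord k.+1) != 0.
  by apply: t_near; rewrite !inordK // eqxx.
have ht2 : t (inord k.+1) (inord k) != 0.
  by apply: t_near; rewrite !inordK // eqxx orbT.
by rewrite mulf_neq0 ?invr_neq0 ?mulf_neq0.
Qed.

Lemma near_step (i j : 'I_(d.+1)) : nat_of_ord j = (nat_of_ord i).+1 -> dd j * t j i = dd i * t i j.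
Proof.
move=> hj.
have ej : j = inord (nat_of_ord i).+1.
  by apply: val_inj; rewrite /= inordK -?hj.
rewrite hj /= inord_val -ej divfK //.
by apply: t_near; rewrite hj eqxx orbT.
Qed.

Lemma dd_sym (i j : 'I_(d.+1)) : dd i * t i j = dd j * t j i.
Proof.
have [far|near] := boolP ((i.+1 < j)%N || (j.+1 < i)%N).
  by rewrite t_far // t_far 1?orbC // !mulr0.
move: near; rewrite negb_or -!leqNgt => /andP [h1 h2].
case: (ltngtP i j) => h.
- by rewrite (near_step (i:=i) (j:=j)) //; lia.
- by rewrite (near_step (i:=j) (j:=i)) //; lia.
- by have -> : i = j by apply: val_inj.
Qed.

Definition K := \sum_(i < d.+1) dd i *: ((w i)^T *m w i).

Lemma Ku j : K *m u j = dd j *: (w j)^T.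
Proof.
rewrite /K mulmx_suml (bigD1 j) //= big1 ?addr0.
  by rewrite -scalemxAl -mulmxA wu_orth eqxx mulmx1.
by move=> i /negbTE ij; rewrite -scalemxAl -mulmxA wu_orth ij mulmx0 scaler0.
Qed.

Lemma KT : K^T = K.
Proof.
rewrite /K trmx_sum'; apply: eq_bigr => i _.
by rewrite linearZ /= trmx_mul trmxK.
Qed.

Lemma uTK j : (u j)^T *m K = dd j *: w j.
Proof. by rewrite -{1}KT -trmx_mul Ku linearZ /= trmxK. Qed.

Lemma EsK k : (Es k)^T *m K = K *m Es k.
Proof.
by rewrite huw trmx_mul -mulmxA uTK mulmxA Ku -scalemxAr -scalemxAl.
Qed.

Lemma Adec : A = \sum_i \sum_j t i j *: (u i *m w j).
Proof.
transitivity ((\sum_i Es i) *m A *m (\sum_j Es j)).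
  by rewrite Es_sum mul1mx mulmx1.
rewrite !mulmx_suml; apply: eq_bigr => i _; rewrite mulmx_sumr.
by apply: eq_bigr => j _; exact: EAE.
Qed.

Lemma KA : A^T *m K = K *m A.
Proof.
rewrite {2}Adec {1}Adec trmx_sum' (mulmx_sumr K) (mulmx_suml K).
transitivity (\sum_(i < d.+1) \sum_(j < d.+1) (dd i * t i j) *: ((w j)^T *m w i)).
  apply: eq_bigr => i _; rewrite trmx_sum' (mulmx_suml K); apply: eq_bigr => j _.
  by rewrite linearZ /= trmx_mul -scalemxAl -mulmxA uTK -scalemxAr scalerA mulrC.
rewrite exchange_big /=; apply: eq_bigr => i _; rewrite (mulmx_sumr K).
apply: eq_bigr => j _.
by rewrite -scalemxAr mulmxA Ku -scalemxAl scalerA -dd_sym mulrC.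
Qed.

Lemma Kinv : exists M, M *m K = 1%:M.
Proof.
exists (\sum_(j < d.+1) (dd j)^-1 *: (u j *m (u j)^T)); apply: mulmx1C.
rewrite (mulmx_sumr K) (eq_bigr (fun j => (Es j)^T)).
  by rewrite -trmx_sum' Es_sum trmx1.
move=> j _; rewrite -scalemxAr mulmxA Ku -scalemxAl scalerA mulVf ?scale1r.
  by rewrite huw trmx_mul.
apply: dd_nz; have := ltn_ord j; lia.
Qed.

End UW.

Lemma K_ex : exists K M : 'M[F]_(d.+1), M *m K = 1%:M /\ A^T *m K = K *m A /\
  forall k, (Es k)^T *m K = K *m Es k.
Proof.
have [uw huw] := uw_ex.
pose u k := (uw k).1; pose w k := (uw k).2.
have h1 : forall k, Es k = u k *m w k by move=> k; case: (huw k).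
have h2 : forall k, w k *m u k = 1%:M by move=> k; case: (huw k).
have [M hM] := Kinv h1 h2.
exists (K u w), M; split => //; split; first exact: (KA h1 h2).
exact: (EsK h1 h2).
Qed.

End Sym.

Section SymK.
Variables (F : fieldType) (d : nat) (A K M : 'M[F]_(d.+1)).
Hypothesis hMK : M *m K = 1%:M.
Hypothesis hAK : A^T *m K = K *m A.

Lemma horner_K q : (horner_mx A q)^T *m K = K *m horner_mx A q.
Proof.
have comm : forall q, horner_mx A q *m A = A *m horner_mx A q.
  move=> q'; have := congr1 (horner_mx A) (mulrC q' 'X).
  by rewrite !rmorphM /= horner_mx_X.
elim/poly_ind: q => [|q c IH].
  by rewrite rmorph0 trmx0 mul0mx mulmx0.
rewrite rmorphD rmorphM /= horner_mx_X horner_mx_C -mulmxE.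
rewrite linearD /= trmx_mul tr_scalar_mx mulmxDl -mulmxA IH mulmxA hAK.
by rewrite -mulmxA -comm mulmxDr mulmxA mul_scalar_mx mul_mx_scalar.
Qed.

Lemma sym3 (X Y Z : 'M[F]_(d.+1)) : X^T *m K = K *m X -> Y^T *m K = K *m Y ->
  Z^T *m K = K *m Z -> X *m Y *m Z = 0 -> Z *m Y *m X = 0.
Proof.
move=> hX hY hZ h0.
have : (X *m Y *m Z)^T *m K = K *m (Z *m Y *m X).
  by rewrite !trmx_mul -!mulmxA hX (mulmxA Y^T) hY -(mulmxA K) (mulmxA Z^T) hZ !mulmxA.
rewrite h0 trmx0 mul0mx => /(congr1 (mulmx M)).
by rewrite mulmx0 mulmxA hMK mul1mx => <-.
Qed.

End SymK.

Unset Implicit Arguments. Set Strict Implicit. Set Printing Implicit Defensive.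
Theorem lemma6p3 (F : fieldType) (d : nat) (hd : (0 < d)%N)
  (Es : 'I_(d.+1) -> 'M[F]_(d.+1)) (A : 'M[F]_(d.+1))
  (theta thetas : 'I_(d.+1) -> F) (r s : 'I_(d.+1))
  (hEs_idem : forall i j : 'I_(d.+1),
     Es i *m Es j = (if i == j then Es i else 0))
  (hEs_rank : forall i, \rank (Es i) = 1%N)
  (hA_far : forall i j : 'I_(d.+1), ((i.+1 < j)%N || (j.+1 < i)%N) ->
     Es i *m A *m Es j = 0)
  (hA_near : forall i j : 'I_(d.+1), ((i.+1 == j) || (j.+1 == i)) ->
     Es i *m A *m Es j != 0)
  (htheta_inj : injective theta)
  (htheta_eig : forall i, eigenvalue A (theta i))
  (hrs : r != s) :
  let Astar := dual_op Es thetas in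
  ((Delta_adj A Astar theta r s /\
      (forall t, Delta_adj A Astar theta r t -> t = s))
   <-> (exists kappa : F, cond_ii A Astar theta r s kappa))
  /\
  (forall kappa : F,
     (Delta_adj A Astar theta r s /\
        (forall t, Delta_adj A Astar theta r t -> t = s)) ->
     cond_ii A Astar theta r s kappa ->
     kappa = astar A Astar theta r).
Proof.
move=> As.
have [K [M [hMK [hAK hEsK]]]] := K_ex hEs_idem hEs_rank hA_far hA_near.
pose E i := prim_idem A theta i.
have Emul : forall i j, E i *m E j = if i == j then E i else 0.
  by move=> i j; exact: E_mul.
have Eidem : forall i, E i *m E i = E i by move=> i; rewrite Emul eqxx.
have Erank : forall i, \rank (E i) = 1%N by move=> i; exact: E_rank.
have Esum : \sum_i E i = 1%:M by exact: E_sum.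
have Enz : forall i, E i != 0 by move=> i; rewrite -mxrank_eq0 Erank.
have EK : forall i, (E i)^T *m K = K *m E i.
  by move=> i; have [q hq] := E_poly A theta i; rewrite /E hq; exact: horner_K.
have AsK : As^T *m K = K *m As.
  rewrite /As /dual_op trmx_sum' mulmx_suml mulmx_sumr; apply: eq_bigr => k _.
  by rewrite linearZ /= -scalemxAl -scalemxAr hEsK.
have sym : forall i j, E i *m As *m E j = 0 -> E j *m As *m E i = 0.
  by move=> i j; apply: (sym3 hMK).
have symnz : forall i j, E i *m As *m E j != 0 -> E j *m As *m E i != 0.
  by move=> i j; apply: contra => /eqP /sym ->.
pose Mk kappa := (As - kappa%:M) *m E r.
have Mdec : forall kappa t, E t *m Mk kappa = E t *m As *m E r - kappa *: (E t *m E r).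
  by move=> kappa t; rewrite /Mk mulmxA mulmxBr mul_mx_scalar mulmxBl -scalemxAl.
have Msum : forall kappa, Mk kappa = \sum_t E t *m Mk kappa.
  by move=> kappa; rewrite -mulmx_suml Esum mul1mx.
have ii_props : forall kappa, cond_ii A As theta r s kappa ->
    [/\ E s *m As *m E r != 0,
        forall t, t != r -> t != s -> E t *m As *m E r = 0 &
        E r *m As *m E r = kappa *: E r].
  move=> kappa; rewrite /cond_ii -/(E r) -/(E s) -/(Mk kappa) => /andP [hsub hsup].
  have [D hD] := submxP hsub.
  have hMk : Mk kappa = E s *m D^T by rewrite -[Mk _]trmxK hD trmx_mul trmxK.
  have Mnz : Mk kappa != 0.
    apply/eqP => h0; have := mxrankS hsup; rewrite h0 trmx0 mxrank0 mxrank_tr Erank.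
    by [].
  have Et0 : forall t, t != s -> E t *m Mk kappa = 0.
    by move=> t ts; rewrite hMk mulmxA Emul (negbTE ts) mul0mx.
  split.
  - have := Mdec kappa s; rewrite Emul eq_sym (negbTE hrs) scaler0 subr0 => <-.
    by rewrite hMk mulmxA Eidem -hMk.
  - move=> t tr ts; have := Mdec kappa t; rewrite Et0 // Emul (negbTE tr) scaler0 subr0.
    by move=> <-.
  - have := Mdec kappa r; rewrite Et0 // Eidem => /eqP; rewrite eq_sym subr_eq0.
    by move/eqP.
split; first split.
- move=> [adj uniq_s]; exists (\tr (E r *m As)).
  set kappa := \tr (E r *m As).
  have hrr : E r *m As *m E r = kappa *: E r by exact: rank1_sandwich.
  have hsr : E s *m As *m E r != 0.
    by apply: symnz; move: adj; rewrite /Delta_adj => /andP [].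
  have ht : forall t, t != r -> t != s -> E t *m As *m E r = 0.
    move=> t tr ts; apply: sym; apply/eqP; apply: contraNT ts => h.
    by apply/eqP; apply: uniq_s; rewrite /Delta_adj eq_sym tr.
  have hMk : Mk kappa = E s *m As *m E r.
    rewrite Msum (bigD1 s) //= big1 ?addr0.
      by rewrite Mdec Emul eq_sym (negbTE hrs) scaler0 subr0.
    move=> t ts; rewrite Mdec; have [->|tr] := eqVneq t r.
      by rewrite Eidem hrr subrr.
    by rewrite ht // Emul (negbTE tr) scaler0 subr0.
  rewrite /cond_ii -/(E r) -/(E s) -/(Mk kappa).
  have hsub : ((Mk kappa)^T <= (E s)^T)%MS by rewrite hMk !trmx_mul mulmxA; apply: submxMl.
  rewrite -(mxrank_leqif_eq hsub).2 !mxrank_tr Erank hMk.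
  have : \rank (E s *m As *m E r) != 0%N by rewrite mxrank_eq0.
  have := rank_leq_row (E s *m As *m E r).
  have : (\rank (E s *m As *m E r) <= \rank (E s))%N := leq_trans (mxrankM_maxl _ _) (mxrankM_maxl _ _).
  rewrite Erank; lia.
- move=> [kappa hk]; have [hsr ht hrr] := ii_props kappa hk.
  split; first by rewrite /Delta_adj hrs /= symnz.
  move=> t; rewrite /Delta_adj => /andP [rt hrt]; apply/eqP; apply: contraNT hrt => ts.
  by apply/eqP; apply: sym; apply: ht; rewrite // eq_sym.
- move=> kappa _ hk; have [_ _ hrr] := ii_props kappa hk.
  have := rank1_sandwich (Eidem r) (Erank r) As; rewrite hrr => /eqP.
  rewrite -subr_eq0 -scalerBl scaler_eq0 (negbTE (Enz r)) orbF subr_eq0.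
  by move/eqP.
Qed.
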